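(* Let $d\ge2$, $\delta\in[0,1/d)$, and let $N$ be a $d\times d$ $\delta$-upper bounded noise matrix. There exists a stochastic matrix $P$ such that $N\cdot P$ is $\delta'$-uniform, where $\delta'=f(\delta)$ with $$f(0)=0,\qquad f(\delta)=\left(d+\frac{1}{2}\cdot\frac{1}{(d-1)^2}\cdot\frac{1-d\delta}{\delta}\right)^{-1}\ \text{for }\delta\in(0,1/d).$$
   Context: A matrix is stochastic if its entries are non-negative and each row sums to $1$. For $\delta\in[0,1/d]$, a stochastic $d\times d$ matrix $N$ is: - $\delta$-upper bounded if $N_{i,i}\ge1-(d-1)\delta$ for all $i$ and $N_{i,j}\le\delta$ for all $i\ne j$; - $\delta$-uniform if $N_{i,i}=1-(d-1)\delta$ and $N_{i,j}=\delta$ for all $i\ne j$. *)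

(* Defs.v *)
From mathcomp Require Import all_boot all_order all_algebra.
Set Implicit Arguments. Unset Strict Implicit. Unset Printing Implicit Defensive.
Import Order.TTheory GRing.Theory Num.Theory.
Local Open Scope ring_scope.

Definition stochastic (R : numDomainType) (d : nat) (N : 'M[R]_d) : Prop :=
  (forall i j, 0 <= N i j) /\ (forall i, \sum_(j < d) N i j = 1).

Definition upper_bounded (R : numDomainType) (d : nat) (delta : R) (N : 'M[R]_d) : Prop :=
  stochastic N /\
  (forall i, 1 - (d%:R - 1) * delta <= N i i) /\
  (forall i j, i != j -> N i j <= delta).

Definition uniform (R : numDomainType) (d : nat) (delta : R) (N : 'M[R]_d) : Prop :=
  stochastic N /\
  (forall i, N i i = 1 - (d%:R - 1) * delta) /\
  (forall i j, i != j -> N i j = delta).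

Definition fdelta (R : numFieldType) (d : nat) (delta : R) : R :=
  if delta == 0 then 0
  else (d%:R + 2^-1 * ((d%:R - 1) ^+ 2)^-1 * ((1 - d%:R * delta) / delta))^-1.

(* Main.v *)
Require Import Defs.
From mathcomp Require Import all_boot all_order all_algebra.
From mathcomp Require Import ring lra.
Set Implicit Arguments. Unset Strict Implicit. Unset Printing Implicit Defensive.
Import Order.TTheory GRing.Theory Num.Theory.
Local Open Scope ring_scope.

Section S.
Variable R : realFieldType.

Lemma min_principle n (M : 'M[R]_n.+1) (a : R) (x : 'I_n.+1 -> R) :
  0 < a -> (forall i, \sum_j M i j = a) -> (forall i j, i != j -> M i j <= 0) ->
  (forall i, 0 <= \sum_j M i j * x j) -> forall i, 0 <= x i.
Proof.
move=> a0 Ma Moff Hx.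
have [i0 _ Hmin] := @arg_minP _ _ _ (@ord0 n) xpredT x isT.
suff : 0 <= x i0 by move=> h i; apply: le_trans h (Hmin i isT).
have E : \sum_j M i0 j * x j = a * x i0 + \sum_j M i0 j * (x j - x i0).
  rewrite -(Ma i0) mulr_suml -big_split /=; apply: eq_bigr => j _; ring.
have H2 : \sum_j M i0 j * (x j - x i0) <= 0.
  apply: sumr_le0 => j _; case: (eqVneq i0 j) => [->|ne]; first by rewrite subrr mulr0.
  by rewrite mulr_le0_ge0 ?Moff // subr_ge0 Hmin.
have := Hx i0; rewrite E => h.
have : 0 <= a * x i0 by lra.
by rewrite pmulr_rge0.
Qed.

Lemma unit_M n (M : 'M[R]_n.+1) (a : R) :
  0 < a -> (forall i, \sum_j M i j = a) -> (forall i j, i != j -> M i j <= 0) ->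
  M \in unitmx.
Proof.
move=> a0 Ma Moff.
rewrite -unitmx_tr -row_free_unit -kermx_eq0; apply/eqP/row_matrixP => i.
rewrite row0; set u := row i _.
have : u *m M^T = 0 by apply/sub_kermxP; exact: row_sub.
move=> Hu.
have Hk : forall k, \sum_j M k j * u 0 j = 0.
  move=> k; transitivity ((u *m M^T) 0 k); last by rewrite Hu mxE.
  by rewrite mxE; apply: eq_bigr => j _; rewrite !mxE mulrC.
apply/rowP => j; rewrite [RHS]mxE; apply/le_anti/andP; split.
- have := @min_principle n M a (fun j => - u 0 j) a0 Ma Moff.
  move=> h; rewrite -oppr_ge0; apply: h => k.
  under eq_bigr do rewrite mulrN; by rewrite sumrN Hk oppr0.
- apply: (@min_principle n M a (fun j => u 0 j) a0 Ma Moff) => k.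
  by rewrite Hk.
Qed.

Lemma main_gen n (delta e : R) (N : 'M[R]_n.+1) :
  0 <= delta -> 0 < 1 - n.+1%:R * delta -> 0 <= e -> 0 <= 1 - n.+1%:R * e ->
  n.+1%:R * delta * (1 - n.+1%:R * e) <= e * (1 - n.+1%:R * delta) ->
  stochastic N -> (forall i j, i != j -> N i j <= delta) ->
  exists P, stochastic P /\ uniform e (N *m P).
Proof.
move=> d0 a0 e0 ne0 Hcond [Nge0 Nrow] Noff.
pose a := 1 - n.+1%:R * delta.
pose M : 'M[R]_n.+1 := \matrix_(i,j) (N i j - delta).
have Ma : forall i, \sum_j M i j = a.
  move=> i; under eq_bigr do rewrite mxE.
  by rewrite sumrB Nrow sumr_const card_ord /a mulr_natl.
have Moff : forall i j, i != j -> M i j <= 0.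
  by move=> i j ij; rewrite mxE subr_le0 Noff.
have Mu := unit_M a0 Ma Moff.
pose X := invmx M.
have MX : M *m X = 1%:M by rewrite mulmxV.
have XM : X *m M = 1%:M by rewrite mulVmx.
have Xge0 : forall j k, 0 <= X j k.
  move=> j k; apply: (@min_principle n M a (fun j => X j k) a0 Ma Moff) => i.
  have -> : \sum_j M i j * X j k = (M *m X) i k by rewrite mxE.
  by rewrite MX mxE ler0n.
have Xrow : forall j, \sum_k X j k = a^-1.
  move=> j; have an0 : a != 0 by rewrite (gt_eqF a0).
  apply: (mulIf an0); rewrite mulVf // mulr_suml.
  transitivity (\sum_l (X *m M) j l).
    under eq_bigr => k _ do rewrite -(Ma k) mulr_sumr.
    rewrite exchange_big /=; apply: eq_bigr => l _; by rewrite mxE.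
  rewrite XM (bigD1 j) //= big1 ?addr0; first by rewrite mxE eqxx.
  by move=> l /negbTE jl; rewrite mxE eq_sym jl.
pose c k := \sum_j X j k.
have csum : \sum_k c k = n.+1%:R * a^-1.
  rewrite /c exchange_big /=; under eq_bigr do rewrite Xrow.
  by rewrite sumr_const card_ord mulr_natl.
have cle : forall k, c k <= n.+1%:R * a^-1.
  move=> k; rewrite -csum (bigD1 k) //= lerDl; apply: sumr_ge0 => l _.
  by apply: sumr_ge0 => j _.
pose z k := e - delta * (1 - n.+1%:R * e) * c k.
have zge0 : forall k, 0 <= z k.
  move=> k; rewrite /z subr_ge0.
  apply: (@le_trans _ _ (delta * (1 - n.+1%:R * e) * (n.+1%:R * a^-1))).
    by apply: ler_wpM2l => //; apply: mulr_ge0.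
  rewrite mulrA -ler_pdivlMr; last by rewrite invr_gt0.
  by rewrite invrK -/a; apply: le_trans Hcond; rewrite le_eqVlt; apply/orP; left; apply/eqP; ring.
pose P : 'M[R]_n.+1 := \matrix_(j,k) ((1 - n.+1%:R * e) * X j k + z k).
have NPe : forall i k, (N *m P) i k = (1 - n.+1%:R * e) * (i == k)%:R + e.
  move=> i k; rewrite mxE.
  under eq_bigr do rewrite mxE mulrDr.
  rewrite big_split /= -mulr_suml Nrow mul1r.
  have -> : \sum_j N i j * ((1 - n.+1%:R * e) * X j k) =
            (1 - n.+1%:R * e) * ((M *m X) i k + delta * c k).
    rewrite mxE /c mulr_sumr -big_split mulr_sumr /=; apply: eq_bigr => j _.
    rewrite mxE; ring.
  by rewrite MX mxE /z; ring.
exists P; split; first split.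
- by move=> j k; rewrite mxE addr_ge0 // mulr_ge0.
- move=> j; under eq_bigr do rewrite mxE.
  rewrite big_split /= -mulr_sumr Xrow /z sumrB sumr_const card_ord -mulr_sumr csum.
  rewrite /a mulr_natl; field; apply: lt0r_neq0; move: a0; rewrite -natr1; lra.
split; first split.
- move=> i k; rewrite NPe addr_ge0 // mulr_ge0 // ler0n.
- move=> i; under eq_bigr do rewrite NPe.
  rewrite big_split /= -mulr_sumr sumr_const card_ord (bigD1 i) //= big1 ?eqxx.
    by rewrite addr0 mulr1 mulr_natl; ring.
  by move=> l /negbTE; rewrite eq_sym => ->.
split.
- by move=> i; rewrite NPe eqxx mulr1 -natr1; ring.
- by move=> i j /negbTE ij; rewrite NPe ij mulr0 add0r.
Qed.
End S.

Theorem proposition16 (R : realFieldType) (d : nat) (delta : R) (N : 'M[R]_d) :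
  (2 <= d)%N -> 0 <= delta -> delta < d%:R^-1 ->
  upper_bounded delta N ->
  exists P : 'M[R]_d, stochastic P /\ uniform (fdelta d delta) (N *m P).
Proof.
case: d N => [|n] N; first by [].
move=> d2 d0 dlt [Nst [_ Noff]].
have np : (0 : R) < n.+1%:R by rewrite ltr0n.
have a0 : 0 < 1 - n.+1%:R * delta.
  rewrite subr_gt0 -[X in _ < X](mulfV (lt0r_neq0 np)); by rewrite ltr_pM2l.
have n2 : (2 : R) <= n.+1%:R by rewrite (ler_nat R 2).
rewrite /fdelta; case: (eqVneq delta 0) => [dz|dn0].
  subst delta; apply: (@main_gen R n 0 _ N) => //; rewrite ?mulr0 ?mul0r ?subr0 //.
apply: (@main_gen R n delta _ N) => //.
all: have dp : 0 < delta by rewrite lt0r dn0.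
all: set q := 2^-1 * ((n.+1%:R - 1) ^+ 2)^-1 * ((1 - n.+1%:R * delta) / delta).
all: have qge0 : 0 <= q by rewrite /q !mulr_ge0 // ?invr_ge0 ?sqr_ge0 ?ltW ?divr_gt0 // ?invr_gt0.
all: have tp : 0 < n.+1%:R + q by lra.
all: have et : (n.+1%:R + q)^-1 * (n.+1%:R + q) = 1 by rewrite mulVf // lt0r_neq0.
- by rewrite invr_ge0 ltW.
- have ep : 0 < (n.+1%:R + q)^-1 by rewrite invr_gt0.
  have := mulr_ge0 qge0 (ltW ep); lra.
- set e := (n.+1%:R + q)^-1.
  have ep : 0 < e by rewrite invr_gt0.
  have Hqe : q * e = 1 - n.+1%:R * e.
    rewrite /e; move: et; rewrite mulrDr; lra.
  have Kp : 0 < (n.+1%:R - 1 : R) ^+ 2 by rewrite exprn_gt0 //; lra.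
  have Ha : 1 - n.+1%:R * delta = 2 * ((n.+1%:R - 1) ^+ 2) * delta * q.
    rewrite /q; field; rewrite lt0r_neq0 //=; lra.
  rewrite Ha -Hqe.
  have K2 : n.+1%:R <= 2 * (n.+1%:R - 1 : R) ^+ 2 by nra.
  have K3 : 0 <= 2 * (n.+1%:R - 1 : R) ^+ 2 - n.+1%:R by rewrite subr_ge0.
  have Y := mulr_ge0 K3 (mulr_ge0 (mulr_ge0 (ltW dp) qge0) (ltW ep)).
  rewrite -subr_ge0; apply: le_trans Y _; rewrite le_eqVlt; apply/orP; left; apply/eqP; ring.
Qed.
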